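(* Let $A$ and $B$ be automata. (1) If $(b,n)$ is a normed backward simulation from $A$ to $B$, then $b$ is a branching backward simulation from $A$ to $B$. (2) If $b$ is a branching backward simulation from $A$ to $B$, define $n:(\mathrm{steps}(A)\cup\mathrm{start}(A))\times\mathrm{states}(B)\to\mathbb{N}$ as follows: for $s\in\mathrm{start}(A)$, $n(s,u)=0$ if $u\notin b[s]$ and otherwise $n(s,u)$ is the minimal length (number of steps) of an execution of $B$ that ends in $u$ and is $b$-related to the one-state execution $s$ of $A$; for a step $t\xrightarrow{a}_A s$, $n(t\xrightarrow{a}s,u)=0$ if $u\notin b[s]$ and otherwise $n(t\xrightarrow{a}s,u)$ is the minimal length of an execution fragment of $B$ that ends in $u$ and is $b$-related to the execution fragment $t\,a\,s$ of $A$. Then $(b,n)$ is a normed backward simulation from $A$ to $B$ (with $\mathbb{N}$ ordered by $<$).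
   Context: An automaton $A$ consists of a set $\mathrm{states}(A)$ of states, a nonempty set $\mathrm{start}(A)\subseteq\mathrm{states}(A)$ of start states, a set $\mathrm{acts}(A)$ of actions containing a distinguished internal action $\tau$, and a set $\mathrm{steps}(A)\subseteq\mathrm{states}(A)\times\mathrm{acts}(A)\times\mathrm{states}(A)$ of steps; write $s\xrightarrow{a}_A t$ for $(s,a,t)\in\mathrm{steps}(A)$. An execution fragment of $A$ is a finite or infinite alternating sequence $s_0a_1s_1a_2s_2\cdots$ of states and actions, beginning with a state and, if finite, ending with a state, such that $s_{i-1}\xrightarrow{a_i}_A s_i$ for all $i>0$; its index set $\mathrm{Index}(\alpha)$ is the set of indices $i$ of its states $s_i$. An execution is an execution fragment whose first state is a start state. For a relation $R$ write $R[s]=\{u\mid (s,u)\in R\}$. Execution correspondence: Let $R\subseteq\mathrm{states}(A)\times\mathrm{states}(B)$ and let $\alpha=s_0a_1s_1\cdots$ and $\alpha'=u_0b_1u_1\cdots$ be execution fragments of $A$ and $B$. An index relation over $R$ between $\alpha$ and $\alpha'$ is a relation $I\subseteq\mathrm{Index}(\alpha)\times\mathrm{Index}(\alpha')$ such that (1) $(i,j)\in I$ implies $(s_i,u_j)\in R$; (2) $(i,j)\in I$, $(i',j')\in I$ and $i<i'$ imply $j\le j'$; (3) every index of $\alpha$ is related by $I$ to some index of $\alpha'$ and every index of $\alpha'$ is related by $I$ to some index of $\alpha$; (4) if $(i,j),(i+1,j+1)\in I$ then $a_{i+1}=b_{j+1}$; if $(i,j),(i+1,j)\in I$ then $a_{i+1}=\tau$;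 if $(i,j),(i,j+1)\in I$ then $b_{j+1}=\tau$. The fragments $\alpha,\alpha'$ are $R$-related, written $(\alpha,\alpha')\in R$, if such an $I$ exists. A normed backward simulation from $A$ to $B$ is a pair $(b,n)$ where $b\subseteq\mathrm{states}(A)\times\mathrm{states}(B)$ is total (every $s\in\mathrm{states}(A)$ has $b[s]\neq\emptyset$) and $n:(\mathrm{steps}(A)\cup\mathrm{start}(A))\times\mathrm{states}(B)\to S$ for some set $S$ with a well-founded strict order $<$, such that: (1) if $s\in\mathrm{start}(A)$ and $u\in b[s]$ then (a) $u\in\mathrm{start}(B)$, or (b) there is $v\in b[s]$ with $v\xrightarrow{\tau}_B u$ and $n(s,v)<n(s,u)$; (2) if $t\xrightarrow{a}_A s$ and $u\in b[s]$ then (a) $u\in b[t]$ and $a=\tau$, or (b) there is $v\in b[t]$ with $v\xrightarrow{a}_B u$, or (c) there is $v\in b[s]$ with $v\xrightarrow{\tau}_B u$ and $n(t\xrightarrow{a}s,v)<n(t\xrightarrow{a}s,u)$. A branching backward simulation from $A$ to $B$ is a total relation $b\subseteq\mathrm{states}(A)\times\mathrm{states}(B)$ such that (1) if $s\in\mathrm{start}(A)$ and $u\in b[s]$ then $B$ has an execution that ends in $u$ and is $b$-related to the one-state execution $s$ of $A$; (2) if $t\xrightarrow{a}_A s$ and $u\in b[s]$ then $B$ has an execution fragment that ends in $u$ and is $b$-related to the execution fragment $t\,a\,s$ of $A$. *)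

(* Defs.v *)
From Stdlib Require Import List Arith Classical ClassicalEpsilon.
Import ListNotations.
Set Implicit Arguments.

Record automaton (Act : Type) (tau : Act) := Automaton {
  state : Type;
  start : state -> Prop;
  acts : Act -> Prop;
  step : state -> Act -> state -> Prop;
  start_nonempty : exists s, start s;
  tau_in_acts : acts tau;
  step_acts : forall s a t, step s a t -> acts a }.

Arguments state {Act tau} _.
Arguments start {Act tau} _ _.
Arguments acts {Act tau} _ _.
Arguments step {Act tau} _ _ _ _.

(* A finite alternating sequence s0 a1 s1 ... ak sk, stored as its first state
   and the list of pairs (a_i, s_i), i = 1..k. *)
Record frag (St Act : Type) := Frag { ffirst : St; ftrans : list (Act * St) }.
Arguments Frag {St Act} _ _.
Arguments ffirst {St Act} _.
Arguments ftrans {St Act} _.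

Definition flen {St Act} (f : frag St Act) : nat := length (ftrans f).
Definition fstates {St Act} (f : frag St Act) : list St :=
  ffirst f :: map snd (ftrans f).
(* state s_i (meaningful for i <= flen f) *)
Definition fstate {St Act} (f : frag St Act) (i : nat) : St :=
  nth i (fstates f) (ffirst f).
(* action a_{i+1} (meaningful for i < flen f); default is irrelevant *)
Definition fact {St Act} (dflt : Act) (f : frag St Act) (i : nat) : Act :=
  nth i (map fst (ftrans f)) dflt.
Definition flast {St Act} (f : frag St Act) : St := last (fstates f) (ffirst f).

Definition frag1 {St Act} (s : St) : frag St Act := Frag s [].
Definition frag2 {St Act} (t : St) (a : Act) (s : St) : frag St Act :=
  Frag t [(a, s)].

Unset Implicit Arguments.
Section Exec.
Context {Act : Type} {tau : Act}.

Definition is_frag (A : automaton tau) (f : frag (state A) Act) : Prop :=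
  forall i, i < flen f -> step A (fstate f i) (fact tau f i) (fstate f (S i)).

Definition is_exec (A : automaton tau) (f : frag (state A) Act) : Prop :=
  is_frag A f /\ start A (ffirst f).

Definition index_relation (A B : automaton tau) (R : state A -> state B -> Prop)
  (al : frag (state A) Act) (al' : frag (state B) Act) (I : nat -> nat -> Prop) : Prop :=
  (forall i j, I i j -> i <= flen al /\ j <= flen al') /\
  (forall i j, I i j -> R (fstate al i) (fstate al' j)) /\
  (forall i j i' j', I i j -> I i' j' -> i < i' -> j <= j') /\
  (forall i, i <= flen al -> exists j, I i j) /\
  (forall j, j <= flen al' -> exists i, I i j) /\
  (forall i j, I i j -> I (S i) (S j) -> fact tau al i = fact tau al' j) /\
  (forall i j, I i j -> I (S i) j -> fact tau al i = tau) /\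
  (forall i j, I i j -> I i (S j) -> fact tau al' j = tau).

Definition R_related (A B : automaton tau) (R : state A -> state B -> Prop)
  (al : frag (state A) Act) (al' : frag (state B) Act) : Prop :=
  exists I, index_relation A B R al al' I.

(* domain (steps(A) ∪ start(A)): a start state, or a step (t,a,s) *)
Definition step_or_start (A : automaton tau) : Type :=
  (state A + (state A * Act * state A))%type.

Definition total_rel (A B : automaton tau) (b : state A -> state B -> Prop) : Prop :=
  forall s, exists u, b s u.

Definition wf_strict_order (S : Type) (lt : S -> S -> Prop) : Prop :=
  well_founded lt /\ (forall x, ~ lt x x) /\
  (forall x y z, lt x y -> lt y z -> lt x z).

Definition normed_backward_simulation (A B : automaton tau)
  (b : state A -> state B -> Prop) (S : Type) (lt : S -> S -> Prop)
  (n : step_or_start A -> state B -> S) : Prop :=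
  total_rel A B b /\
  (forall s u, start A s -> b s u ->
     start B u \/
     exists v, b s v /\ step B v tau u /\ lt (n (inl s) v) (n (inl s) u)) /\
  (forall t a s u, step A t a s -> b s u ->
     (b t u /\ a = tau) \/
     (exists v, b t v /\ step B v a u) \/
     (exists v, b s v /\ step B v tau u /\
        lt (n (inr (t, a, s)) v) (n (inr (t, a, s)) u))).

Definition branching_backward_simulation (A B : automaton tau)
  (b : state A -> state B -> Prop) : Prop :=
  total_rel A B b /\
  (forall s u, start A s -> b s u ->
     exists be, is_exec B be /\ flast be = u /\ R_related A B b (frag1 s) be) /\
  (forall t a s u, step A t a s -> b s u ->
     exists be, is_frag B be /\ flast be = u /\ R_related A B b (frag2 t a s) be).

(* minimal natural number satisfying P (arbitrary if none) *)
Definition min_nat (P : nat -> Prop) : nat :=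
  epsilon (inhabits 0) (fun k => P k /\ forall m, P m -> k <= m).

Definition branching_norm (A B : automaton tau) (b : state A -> state B -> Prop)
  (x : step_or_start A) (u : state B) : nat :=
  match x with
  | inl s =>
      if excluded_middle_informative (b s u) then
        min_nat (fun k => exists be, is_exec B be /\ flast be = u /\
                   R_related A B b (frag1 s) be /\ flen be = k)
      else 0
  | inr (t, a, s) =>
      if excluded_middle_informative (b s u) then
        min_nat (fun k => exists be, is_frag B be /\ flast be = u /\
                   R_related A B b (frag2 t a s) be /\ flen be = k)
      else 0
  end.

End Exec.

(* Main.v *)
Require Import Defs.
From Stdlib Require Import List Arith Lia Classical ClassicalEpsilon.
Import ListNotations.

Definition snoc {St Ac} (f : frag St Ac) (c : Ac) (u : St) : frag St Ac :=
  Frag (ffirst f) (ftrans f ++ [(c,u)]).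

Section G.
Context {St Ac : Type}.
Implicit Types (f : frag St Ac).

Lemma flen_snoc f c u : flen (snoc f c u) = S (flen f).
Proof. unfold flen, snoc; simpl. rewrite length_app; simpl; lia. Qed.

Lemma fstate_snoc_old f c u j : j <= flen f -> fstate (snoc f c u) j = fstate f j.
Proof.
  intros H. unfold fstate, fstates, snoc; cbn [ffirst ftrans]. rewrite map_app, app_comm_cons.
  apply app_nth1. simpl. rewrite length_map. unfold flen in H. lia.
Qed.

Lemma fstate_snoc_new f c u : fstate (snoc f c u) (S (flen f)) = u.
Proof.
  unfold fstate, fstates, snoc, flen; cbn [ffirst ftrans]. rewrite map_app, app_comm_cons.
  rewrite app_nth2; simpl; rewrite length_map; [|lia].
  replace (length (ftrans f) - length (ftrans f)) with 0 by lia. reflexivity.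
Qed.

Lemma fact_snoc_old (d : Ac) f c u j : j < flen f -> Defs.fact d (snoc f c u) j = Defs.fact d f j.
Proof.
  intros H. unfold Defs.fact, snoc; cbn [ffirst ftrans]. rewrite map_app.
  apply app_nth1. rewrite length_map. exact H.
Qed.

Lemma fact_snoc_new (d : Ac) f c u : Defs.fact d (snoc f c u) (flen f) = c.
Proof.
  unfold Defs.fact, snoc, flen; cbn [ffirst ftrans]. rewrite map_app.
  rewrite app_nth2; rewrite length_map; [|lia].
  replace (length (ftrans f) - length (ftrans f)) with 0 by lia. reflexivity.
Qed.

Lemma flast_snoc f c u : flast (snoc f c u) = u.
Proof. unfold flast, fstates, snoc; cbn [ffirst ftrans]. rewrite map_app, app_comm_cons. apply last_last. Qed.

Lemma snoc_cases f : ftrans f = [] \/ exists f' c u, f = snoc f' c u.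
Proof.
  destruct f as [x tr]. destruct tr as [|p tr] using rev_ind; [left; reflexivity|].
  right. destruct p as [c u]. exists (Frag x tr), c, u. reflexivity.
Qed.

Lemma flast_fstate f : flast f = fstate f (flen f).
Proof.
  destruct (snoc_cases f) as [H|[f' [c [u ->]]]].
  - unfold flast, fstate, fstates, flen. rewrite H. reflexivity.
  - rewrite flast_snoc, flen_snoc, fstate_snoc_new. reflexivity.
Qed.

Lemma flast_nil f : ftrans f = [] -> flast f = ffirst f.
Proof. intros H. unfold flast, fstates. rewrite H. reflexivity. Qed.

Lemma flen_nil f : ftrans f = [] -> flen f = 0.
Proof. intros H. unfold flen. rewrite H. reflexivity. Qed.
End G.

Lemma min_nat_spec (P : nat -> Prop) :
  (exists k, P k) -> P (min_nat P) /\ forall m, P m -> min_nat P <= m.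
Proof.
  intros [k Hk]. unfold min_nat.
  apply (epsilon_spec (inhabits 0) (fun k => P k /\ forall m, P m -> k <= m)).
  induction k as [k IH] using lt_wf_ind.
  destruct (classic (exists m, P m /\ m < k)) as [[m [Hm Hlt]]|Hn].
  - exact (IH m Hlt Hm).
  - exists k. split; auto. intros m Hm. destruct (le_lt_dec k m); auto.
    exfalso; apply Hn; eauto.
Qed.

Section Rel.
Context {Act : Type} {tau : Act} (A B : automaton tau).

Lemma is_frag_snoc (f : frag (state B) Act) c u :
  is_frag B f -> step B (flast f) c u -> is_frag B (snoc f c u).
Proof.
  intros Hf Hs i Hi. rewrite flen_snoc in Hi.
  destruct (Nat.eq_dec i (flen f)) as [->|Hne].
  - rewrite fact_snoc_new, fstate_snoc_new, fstate_snoc_old by lia.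
    rewrite <- flast_fstate. exact Hs.
  - rewrite fact_snoc_old, !fstate_snoc_old by lia. apply Hf. lia.
Qed.

Lemma is_frag_unsnoc (f : frag (state B) Act) c u :
  is_frag B (snoc f c u) -> is_frag B f /\ step B (flast f) c u.
Proof.
  intros Hf. split.
  - intros i Hi. specialize (Hf i). rewrite flen_snoc in Hf.
    rewrite fact_snoc_old, !fstate_snoc_old in Hf by lia. apply Hf. lia.
  - specialize (Hf (flen f)). rewrite flen_snoc, fact_snoc_new, fstate_snoc_new,
      fstate_snoc_old in Hf by lia. rewrite flast_fstate. apply Hf. lia.
Qed.

Lemma rel_ext R (al : frag (state A) Act) (be : frag (state B) Act) I u :
  index_relation A B R al be I -> R (flast al) u ->
  index_relation A B R al (snoc be tau u)
    (fun i j => I i j \/ (i = flen al /\ j = S (flen be))).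
Proof.
  intros [Hb [HR [Hm [Hc1 [Hc2 [H4a [H4b H4c]]]]]]] Hu.
  assert (Hk: I (flen al) (flen be)).
  { destruct (Hc2 (flen be) (le_n _)) as [i Hi]. pose proof (Hb _ _ Hi).
    destruct (Nat.eq_dec i (flen al)) as [<-|]; [exact Hi|].
    destruct (Hc1 (flen al) (le_n _)) as [j Hj]. pose proof (Hb _ _ Hj).
    assert (flen be <= j) by (apply (Hm _ _ _ _ Hi Hj); lia).
    replace (flen be) with j by lia. exact Hj. }
  rewrite flast_fstate in Hu.
  split; [|split; [|split; [|split; [|split; [|split; [|split]]]]]].
  - intros i j [H|[-> ->]]; rewrite flen_snoc; [apply Hb in H; lia | lia].
  - intros i j [H|[-> ->]].
    + pose proof (Hb _ _ H). rewrite fstate_snoc_old by lia. auto.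
    + rewrite fstate_snoc_new. exact Hu.
  - intros i j i' j' [H|[-> ->]] [H'|[-> ->]] Hlt.
    + eauto.
    + apply Hb in H; lia.
    + apply Hb in H'; lia.
    + lia.
  - intros i Hi. destruct (Hc1 i Hi) as [j Hj]; eauto.
  - intros j Hj. rewrite flen_snoc in Hj.
    destruct (Nat.eq_dec j (S (flen be))) as [->|Hne].
    + exists (flen al); right; auto.
    + destruct (Hc2 j ltac:(lia)) as [i Hi]; exists i; left; auto.
  - intros i j [H|[-> ->]] [H'|[Hi Hj]].
    + pose proof (Hb _ _ H'). rewrite fact_snoc_old by lia. eauto.
    + injection Hj as ->. rewrite fact_snoc_new.
      apply (H4b i (flen be)); [exact H| rewrite Hi; exact Hk].
    + apply Hb in H'; lia.
    + lia.
  - intros i j [H|[-> ->]] [H'|[Hi Hj]].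
    + eauto.
    + apply Hb in H; lia.
    + apply Hb in H'; lia.
    + lia.
  - intros i j [H|[-> ->]] [H'|[Hi Hj]].
    + pose proof (Hb _ _ H'). rewrite fact_snoc_old by lia. eauto.
    + injection Hj as ->. rewrite fact_snoc_new. reflexivity.
    + apply Hb in H'; lia.
    + lia.
Qed.

Lemma rel_restr R (al : frag (state A) Act) (be : frag (state B) Act) c u I :
  index_relation A B R al (snoc be c u) I ->
  (forall i, i <= flen al -> exists j, j <= flen be /\ I i j) ->
  index_relation A B R al be (fun i j => I i j /\ j <= flen be).
Proof.
  intros [Hb [HR [Hm [Hc1 [Hc2 [H4a [H4b H4c]]]]]]] Hcov.
  split; [|split; [|split; [|split; [|split; [|split; [|split]]]]]].
  - intros i j [H Hj]; apply Hb in H; lia.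
  - intros i j [H Hj]; rewrite <- (fstate_snoc_old be c u) by lia; eauto.
  - intros i j i' j' [H _] [H' _]; eauto.
  - intros i Hi; destruct (Hcov i Hi) as [j [? ?]]; eauto.
  - intros j Hj; destruct (Hc2 j ltac:(rewrite flen_snoc; lia)) as [i Hi]; exists i; auto.
  - intros i j [H Hj] [H' Hj']; rewrite <- (fact_snoc_old tau be c u) by lia; eauto.
  - intros i j [H _] [H' _]; eauto.
  - intros i j [H Hj] [H' Hj']; rewrite <- (fact_snoc_old tau be c u) by lia; eauto.
Qed.
End Rel.

Section Main.
Context {Act : Type} {tau : Act} (A B : automaton tau).

Lemma rel_11 (R : state A -> state B -> Prop) s u : R s u ->
  R_related A B R (frag1 s) (frag1 u).
Proof.
  intros H. exists (fun i j => i = 0 /\ j = 0).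
  split; [|split; [|split; [|split; [|split; [|split; [|split]]]]]];
    unfold flen; cbn.
  - intros i j [-> ->]; lia.
  - intros i j [-> ->]; exact H.
  - intros i j i' j' [-> ->] [-> ->]; lia.
  - intros i Hi; exists 0; lia.
  - intros j Hj; exists 0; lia.
  - intros i j _ [Hi _]; discriminate.
  - intros i j _ [Hi _]; discriminate.
  - intros i j _ [_ Hj]; discriminate.
Qed.

Lemma rel_21 (R : state A -> state B -> Prop) t a s u : a = tau -> R t u -> R s u ->
  R_related A B R (frag2 t a s) (frag1 u).
Proof.
  intros Ha H1 H2. exists (fun i j => i <= 1 /\ j = 0).
  split; [|split; [|split; [|split; [|split; [|split; [|split]]]]]];
    unfold flen; cbn.
  - intros i j [? ->]; lia.
  - intros i j [Hi ->]. destruct i as [|[|i]]; cbn; auto; lia.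
  - intros i j i' j' [_ ->] [_ ->]; lia.
  - intros i Hi; exists 0; lia.
  - intros j Hj; exists 0; lia.
  - intros i j [_ ->] [_ Hj]; discriminate.
  - intros i j [_ ->] [Hi _]. assert (i = 0) by lia. subst i. exact Ha.
  - intros i j [_ ->] [_ Hj]; discriminate.
Qed.

Lemma rel_22 (R : state A -> state B -> Prop) t a s v u : R t v -> R s u ->
  R_related A B R (frag2 t a s) (frag2 v a u).
Proof.
  intros H1 H2. exists (fun i j => i = j /\ i <= 1).
  split; [|split; [|split; [|split; [|split; [|split; [|split]]]]]];
    unfold flen; cbn.
  - intros i j [-> ?]; lia.
  - intros i j [-> Hi]. destruct j as [|[|i]]; cbn; auto; lia.
  - intros i j i' j' [-> _] [-> _]; lia.
  - intros i Hi; exists i; lia.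
  - intros j Hj; exists j; lia.
  - intros i j [-> _] [_ Hi]. assert (j = 0) by lia. subst j. reflexivity.
  - intros i j [-> _] [Hi _]. lia.
  - intros i j [-> _] [Hi _]. lia.
Qed.

Lemma is_frag_frag1 (u : state B) : is_frag B (frag1 u).
Proof. intros i Hi. unfold flen in Hi; cbn in Hi; lia. Qed.

Lemma is_frag_frag2 (v : state B) a u : step B v a u -> is_frag B (frag2 v a u).
Proof. intros H i Hi. unfold flen in Hi; cbn in Hi. assert (i = 0) by lia. subst. exact H. Qed.

Lemma part1 (S : Type) (lt : S -> S -> Prop) (b : state A -> state B -> Prop)
      (n : step_or_start A -> state B -> S) :
  wf_strict_order S lt -> normed_backward_simulation A B b S lt n ->
  branching_backward_simulation A B b.
Proof.
  intros [Hwf _] [Htot [Hst Hstep]]. split; [exact Htot|split].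
  - intros s u Hs Hbu.
    assert (G: forall x u, n (inl s) u = x -> b s u ->
      exists be, is_exec B be /\ flast be = u /\ R_related A B b (frag1 s) be).
    { intro x. induction x as [x IH] using (well_founded_ind Hwf).
      intros w Hx Hbw. destruct (Hst s w Hs Hbw) as [Hw | [v [Hbv [Hsv Hlt]]]].
      - exists (frag1 w). split; [split; [apply is_frag_frag1|exact Hw]|].
        split; [reflexivity|]. apply rel_11; exact Hbw.
      - subst x. destruct (IH _ Hlt v eq_refl Hbv) as [be [[Hf Hfs] [Hl [I HI]]]].
        exists (snoc be tau w). split; [split|split].
        + apply is_frag_snoc; [exact Hf| rewrite Hl; exact Hsv].
        + exact Hfs.
        + apply flast_snoc.
        + eexists. apply rel_ext; [exact HI| exact Hbw]. }
    exact (G _ u eq_refl Hbu).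
  - intros t a s u Hts Hbu.
    assert (G: forall x u, n (inr (t, a, s)) u = x -> b s u ->
      exists be, is_frag B be /\ flast be = u /\ R_related A B b (frag2 t a s) be).
    { intro x. induction x as [x IH] using (well_founded_ind Hwf).
      intros w Hx Hbw.
      destruct (Hstep t a s w Hts Hbw) as [[Hbt Ha] | [[v [Hbv Hvw]] | [v [Hbv [Hsv Hlt]]]]].
      - exists (frag1 w). split; [apply is_frag_frag1|]. split; [reflexivity|].
        apply rel_21; assumption.
      - exists (frag2 v a w). split; [apply is_frag_frag2; exact Hvw|].
        split; [reflexivity|]. apply rel_22; assumption.
      - subst x. destruct (IH _ Hlt v eq_refl Hbv) as [be [Hf [Hl [I HI]]]].
        exists (snoc be tau w). split; [|split].
        + apply is_frag_snoc; [exact Hf| rewrite Hl; exact Hsv].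
        + apply flast_snoc.
        + eexists. apply rel_ext; [exact HI| exact Hbw]. }
    exact (G _ u eq_refl Hbu).
Qed.

Lemma norm_inl_le b s v be : b s v -> is_exec B be -> flast be = v ->
  R_related A B b (frag1 s) be -> branching_norm A B b (inl s) v <= flen be.
Proof.
  intros Hb H1 H2 H3. unfold branching_norm.
  destruct (excluded_middle_informative (b s v)) as [_|C]; [|contradiction].
  apply min_nat_spec; [|]; eauto 10.
Qed.

Lemma norm_inl_spec b s u : b s u ->
  (exists be, is_exec B be /\ flast be = u /\ R_related A B b (frag1 s) be) ->
  exists be, is_exec B be /\ flast be = u /\ R_related A B b (frag1 s) be /\
    flen be = branching_norm A B b (inl s) u.
Proof.
  intros Hb [be [H1 [H2 H3]]]. unfold branching_norm.
  destruct (excluded_middle_informative (b s u)) as [_|C]; [|contradiction].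
  apply min_nat_spec; eauto 10.
Qed.

Lemma norm_inr_le b t a s v be : b s v -> is_frag B be -> flast be = v ->
  R_related A B b (frag2 t a s) be -> branching_norm A B b (inr (t, a, s)) v <= flen be.
Proof.
  intros Hb H1 H2 H3. unfold branching_norm.
  destruct (excluded_middle_informative (b s v)) as [_|C]; [|contradiction].
  apply min_nat_spec; [|]; eauto 10.
Qed.

Lemma norm_inr_spec b t a s u : b s u ->
  (exists be, is_frag B be /\ flast be = u /\ R_related A B b (frag2 t a s) be) ->
  exists be, is_frag B be /\ flast be = u /\ R_related A B b (frag2 t a s) be /\
    flen be = branching_norm A B b (inr (t, a, s)) u.
Proof.
  intros Hb [be [H1 [H2 H3]]]. unfold branching_norm.
  destruct (excluded_middle_informative (b s u)) as [_|C]; [|contradiction].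
  apply min_nat_spec; eauto 10.
Qed.

End Main.

Section Main2.
Context {Act : Type} {tau : Act} (A B : automaton tau).

Lemma part2 (b : state A -> state B -> Prop) :
  branching_backward_simulation A B b ->
  normed_backward_simulation A B b nat Peano.lt (branching_norm A B b).
Proof.
  intros [Htot [Hst Hstep]]. split; [exact Htot|split].
  - intros s u Hs Hbu.
    destruct (norm_inl_spec A B b s u Hbu (Hst s u Hs Hbu)) as [be [[Hf Hfs] [Hl [[I HI] Hn]]]].
    destruct (snoc_cases be) as [Hnil | [f [c [w ->]]]].
    + left. rewrite flast_nil in Hl by exact Hnil. rewrite <- Hl. exact Hfs.
    + right. rewrite flast_snoc in Hl. subst w.
      pose proof HI as [Hb [HR [Hm [Hc1 [Hc2 [H4a [H4b H4c]]]]]]].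
      assert (Hk0 : I 0 (flen f)).
      { destruct (Hc2 (flen f)) as [i Hi]; [rewrite flen_snoc; lia|].
        pose proof (Hb _ _ Hi). unfold flen at 1 in H; cbn in H.
        replace i with 0 in Hi by lia. exact Hi. }
      assert (Hk1 : I 0 (S (flen f))).
      { destruct (Hc2 (S (flen f))) as [i Hi]; [rewrite flen_snoc; lia|].
        pose proof (Hb _ _ Hi). unfold flen at 1 in H; cbn in H.
        replace i with 0 in Hi by lia. exact Hi. }
      pose proof (H4c _ _ Hk0 Hk1) as Hc. rewrite fact_snoc_new in Hc. subst c.
      apply is_frag_unsnoc in Hf as [Hf Hsv].
      exists (flast f). split; [|split; [exact Hsv|]].
      * pose proof (HR _ _ Hk0) as Hr. rewrite fstate_snoc_old in Hr by lia.
        rewrite flast_fstate. exact Hr.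
      * assert (Hr: R_related A B b (frag1 s) f).
        { eexists. apply (rel_restr A B b _ f tau u I HI).
          intros i Hi. unfold flen in Hi; cbn in Hi. replace i with 0 by lia.
          exists (flen f); split; [lia|exact Hk0]. }
        assert (Hbv : b s (flast f)).
        { pose proof (HR _ _ Hk0) as Hr'. rewrite fstate_snoc_old in Hr' by lia.
          rewrite flast_fstate. exact Hr'. }
        pose proof (norm_inl_le A B b s (flast f) f Hbv (conj Hf Hfs) eq_refl Hr).
        rewrite <- Hn, flen_snoc. lia.
  - intros t a s u Hts Hbu.
    destruct (norm_inr_spec A B b t a s u Hbu (Hstep t a s u Hts Hbu)) as [be [Hf [Hl [[I HI] Hn]]]].
    pose proof HI as [Hb [HR [Hm [Hc1 [Hc2 [H4a [H4b H4c]]]]]]].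
    destruct (snoc_cases be) as [Hnil | [f [c [w ->]]]].
    + left. rewrite flast_nil in Hl by exact Hnil. pose proof (flen_nil be Hnil) as Hz.
      assert (H0: I 0 0).
      { destruct (Hc1 0) as [j Hj]; [unfold flen; cbn; lia|].
        pose proof (Hb _ _ Hj). replace j with 0 in Hj by lia. exact Hj. }
      assert (H1: I 1 0).
      { destruct (Hc1 1) as [j Hj]; [unfold flen; cbn; lia|].
        pose proof (Hb _ _ Hj). replace j with 0 in Hj by lia. exact Hj. }
      split.
      * pose proof (HR _ _ H0) as Hr. cbn in Hr. unfold fstate in Hr. cbn in Hr.
        rewrite <- Hl. exact Hr.
      * exact (H4b _ _ H0 H1).
    + right. rewrite flast_snoc in Hl. subst w.
      set (k0 := flen f).
      assert (Hl1 : I 1 (S k0)).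
      { destruct (Hc1 1) as [j Hj]; [unfold flen; cbn; lia|].
        destruct (Hc2 (S k0)) as [i Hi]; [rewrite flen_snoc; lia|].
        pose proof (Hb _ _ Hj) as Bj. pose proof (Hb _ _ Hi) as Bi.
        rewrite flen_snoc in Bj, Bi. unfold flen at 1 in Bj. unfold flen at 1 in Bi. cbn in Bj, Bi.
        destruct (Nat.eq_dec i 1) as [->|Hne]; [exact Hi|].
        assert (S k0 <= j) by (apply (Hm _ _ _ _ Hi Hj); lia).
        replace (S k0) with j by (unfold k0 in *; lia). exact Hj. }
      apply is_frag_unsnoc in Hf as [Hf Hsv].
      destruct (classic (I 1 k0)) as [Hk|Hk].
      * right. pose proof (H4c _ _ Hk Hl1) as Hc. unfold k0 in Hc.
        rewrite fact_snoc_new in Hc. subst c.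
        assert (Hbv : b s (flast f)).
        { pose proof (HR _ _ Hk) as Hr'. unfold k0 in Hr'.
          rewrite fstate_snoc_old in Hr' by lia.
          rewrite flast_fstate. exact Hr'. }
        exists (flast f). split; [exact Hbv|split; [exact Hsv|]].
        assert (Hr: R_related A B b (frag2 t a s) f).
        { eexists. apply (rel_restr A B b _ f tau u I HI).
          intros i Hi. unfold flen in Hi; cbn in Hi.
          destruct (Nat.eq_dec i 1) as [->|Hne].
          - exists k0; split; [unfold k0; lia|exact Hk].
          - replace i with 0 by lia.
            destruct (Hc1 0) as [j Hj]; [unfold flen; cbn; lia|].
            pose proof (Hb _ _ Hj) as Bj. rewrite flen_snoc in Bj.
            exists j; split; [|exact Hj].
            destruct (Nat.eq_dec j (S k0)) as [->|]; [|unfold k0 in *; lia].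
            assert (S k0 <= k0) by (apply (Hm _ _ _ _ Hj Hk); lia). lia. }
        pose proof (norm_inr_le A B b t a s (flast f) f Hbv Hf eq_refl Hr).
        rewrite <- Hn, flen_snoc. lia.
      * left.
        assert (H0 : I 0 k0).
        { destruct (Hc2 k0) as [i Hi]; [rewrite flen_snoc; unfold k0; lia|].
          pose proof (Hb _ _ Hi) as Bi. unfold flen at 1 in Bi. cbn in Bi.
          destruct (Nat.eq_dec i 1) as [->|]; [contradiction|].
          replace i with 0 in Hi by lia. exact Hi. }
        pose proof (H4a _ _ H0 Hl1) as Ha. unfold k0 in Ha.
        rewrite fact_snoc_new in Ha. cbn in Ha. subst c.
        exists (flast f). split; [|exact Hsv].
        pose proof (HR _ _ H0) as Hr'. unfold k0 in Hr'.
        rewrite fstate_snoc_old in Hr' by lia.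
        rewrite flast_fstate. exact Hr'.
Qed.
End Main2.

Theorem mainTheorem9 (Act : Type) (tau : Act) (A B : automaton tau) :
  (forall (S : Type) (lt : S -> S -> Prop) (b : state A -> state B -> Prop)
          (n : step_or_start A -> state B -> S),
     wf_strict_order S lt ->
     normed_backward_simulation A B b S lt n ->
     branching_backward_simulation A B b) /\
  (forall b : state A -> state B -> Prop,
     branching_backward_simulation A B b ->
     normed_backward_simulation A B b nat Peano.lt (branching_norm A B b)).
Proof.
  split.
  - intros S lt b n. apply part1.
  - intros b. apply part2.
Qed.
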